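(* Let $\{w^k\}$ be generated by the L-GADMM iteration. Then for every $k\ge0$, $$\|w^{k+1}-w^{k+2}\|_H^2\le\|w^k-w^{k+1}\|_H^2.$$
   Context: Standing setting. Let $m\ge 2$, $\ell$, $n_1,\dots,n_m$ be positive integers. For $i=1,\dots,m$ let $\theta_i:\mathbb{R}^{n_i}\to\mathbb{R}$ be convex, $\mathcal{X}_i\subseteq\mathbb{R}^{n_i}$ nonempty closed convex, $A_i\in\mathbb{R}^{\ell\times n_i}$ of full column rank, and $b\in\mathbb{R}^\ell$. Problem (P): $\min\{\sum_{i=1}^m\theta_i(x_i):\sum_{i=1}^mA_ix_i=b,\ x_i\in\mathcal{X}_i\}$, assumed to have a nonempty solution set. Write $u=(x_1,\dots,x_m)$, $w=(x_1,\dots,x_m,y)$ with $y\in\mathbb{R}^\ell$, $\theta(u)=\sum_i\theta_i(x_i)$, $F(w)=(-A_1^\top y,\dots,-A_m^\top y,\ \sum_iA_ix_i-b)$, $\mathcal{W}=\mathcal{X}_1\times\cdots\times\mathcal{X}_m\times\mathbb{R}^\ell$, and $\mathcal{W}^*=\{w^*\in\mathcal{W}:\theta(u)-\theta(u^* )+(w-w^* )^\top F(w^* )\ge0\ \forall w\in\mathcal{W}\}$ (nonempty). For symmetric $G$, $\|v\|_G^2:=v^\top Gv$; $\|\cdot\|$ is the Euclidean norm. Vectors are partitioned as $w=(R,x_m,y)$ with $R=(x_1,\dots,x_{m-1})$. Parameters: $\rho>0$, $\gamma\in(0,2)$, symmetric positive definite $P_i\in\mathbb{R}^{n_i\times n_i}$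 ($i=1,\dots,m$) such that $G_1\succ0$, where $G_1$ is the symmetric block matrix with diagonal blocks $P_1,\dots,P_{m-1}$ and $(i,j)$ block $-\rho A_i^\top A_j$ for $i\ne j$, $1\le i,j\le m-1$. Matrices (w.r.t. the partition $(R,x_m,y)$): $Q=\begin{pmatrix}G_1&0&0\\0&\rho A_m^\top A_m+P_m&(1-\gamma)A_m^\top\\0&-A_m&\frac1\rho I_\ell\end{pmatrix}$, $M=\begin{pmatrix}I&0&0\\0&I_{n_m}&0\\0&-\rho A_m&\gamma I_\ell\end{pmatrix}$, $H=\begin{pmatrix}G_1&0&0\\0&P_m+\frac\rho\gamma A_m^\top A_m&\frac{1-\gamma}\gamma A_m^\top\\0&\frac{1-\gamma}\gamma A_m&\frac1{\gamma\rho}I_\ell\end{pmatrix}$, $N=Q^\top+Q-M^\top HM$. L-GADMM iteration: from an arbitrary $w^0=(x_1^0,\dots,x_m^0,y^0)\in\mathcal{W}$, for $k=0,1,2,\dots$: $x_j^{k+1}=\arg\min_{x_j\in\mathcal{X}_j}\{\theta_j(x_j)+\frac\rho2\|A_jx_j+\sum_{i=1,i\ne j}^mA_ix_i^k-b-\frac{y^k}\rho\|^2+\frac12\|x_j-x_j^k\|_{P_j}^2\}$ for $j=1,\dots,m-1$; $x_m^{k+1}=\arg\min_{x_m\in\mathcal{X}_m}\{\theta_m(x_m)+\frac\rho2\|\gamma\sum_{i=1}^{m-1}A_ix_i^{k+1}+(1-\gamma)(b-A_mx_m^k)+A_mx_m-b-\frac{y^k}\rho\|^2+\frac12\|x_m-x_m^k\|_{P_m}^2\}$;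 $y^{k+1}=y^k-\rho\big(\gamma\sum_{i=1}^{m-1}A_ix_i^{k+1}+(1-\gamma)(b-A_mx_m^k)+A_mx_m^{k+1}-b\big)$. Auxiliary sequence: $\bar w^k=(\bar x_1^k,\dots,\bar x_m^k,\bar y^k)$ with $\bar x_i^k=x_i^{k+1}$ ($i=1,\dots,m$) and $\bar y^k=y^k-\rho(\sum_{i=1}^{m-1}A_ix_i^{k+1}+A_mx_m^k-b)$; $\bar u^k=(\bar x_1^k,\dots,\bar x_m^k)$, $R^k=(x_1^k,\dots,x_{m-1}^k)$, $\bar R^k=(\bar x_1^k,\dots,\bar x_{m-1}^k)$. *)

(* Defs.v *)
From HB Require Import structures.
From mathcomp Require Import all_boot all_order all_algebra.
From mathcomp Require Import all_classical all_reals all_analysis.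
Import numFieldNormedType.Exports.
Unset Printing Implicit Defensive.
Import Order.TTheory GRing.Theory Num.Theory.
Local Open Scope ring_scope.
Local Open Scope classical_set_scope.

Section Defs.
Variable R : realType.

Definition bil {a b} (u : 'cV[R]_a) (M : 'M[R]_(a, b)) (v : 'cV[R]_b) : R :=
  (u^T *m M *m v) 0 0.

Definition qf {a} (G : 'M[R]_a) (v : 'cV[R]_a) : R := bil v G v.

Definition sqn {a} (v : 'cV[R]_a) : R := (v^T *m v) 0 0.

Definition sym_pd a (P : 'M[R]_a) : Prop :=
  P^T = P /\ forall v : 'cV[R]_a, v != 0 -> 0 < qf P v.

End Defs.
Arguments bil {R a b}. Arguments qf {R a}. Arguments sqn {R a}.
Arguments sym_pd {R a}.


(* Blocks are indexed by 'I_p.+1 (so m = p + 1 blocks); the last block x_m is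
   ord_max, the blocks x_1..x_{m-1} (forming R) are the i with i != ord_max. *)
Section Iter.
Variables (R : realType) (p l : nat) (n : 'I_p.+1 -> nat).
Variables (A : forall i, 'M[R]_(l, n i)) (P : forall i, 'M[R]_(n i)) (rho gam : R).

Notation blocks := (forall i : 'I_p.+1, 'cV[R]_(n i)).

(* ||R||_{G_1}^2 where G_1 has diagonal blocks P_i and (i,j) block -rho A_i^T A_j,
   for i, j ranging over the first m-1 blocks; the entries for ord_max are ignored. *)
Definition G1form (x : blocks) : R :=
  \sum_(i | i != ord_max) qf (P i) (x i)
  + \sum_(i | i != ord_max) \sum_(j | (j != ord_max) && (j != i))
       bil (x i) (- rho *: ((A i)^T *m A j)) (x j).

Definition G1_pd : Prop :=
  forall x : blocks, (exists i, (i != ord_max) && (x i != 0)) -> 0 < G1form x.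

(* ||w||_H^2 = w^T H w, expanded along the partition (R, x_m, y). *)
Definition Hform (x : blocks) (y : 'cV[R]_l) : R :=
  let xm := x ord_max in
  G1form x
  + qf (P ord_max + (rho / gam) *: ((A ord_max)^T *m A ord_max)) xm
  + bil xm (((1 - gam) / gam) *: (A ord_max)^T) y
  + bil y (((1 - gam) / gam) *: A ord_max) xm
  + qf ((gam * rho)^-1%:M) y.

Definition Axsum (x : blocks) : 'cV[R]_l := \sum_i (A i *m x i).

Section Problem.
Variables (theta : forall i, 'cV[R]_(n i) -> R) (X : forall i, set 'cV[R]_(n i))
          (b : 'cV[R]_l).

Definition thetasum (x : blocks) : R := \sum_i theta i (x i).

Definition feasible (x : blocks) : Prop := Axsum x = b /\ forall i, X i (x i).

Definition P_solvable : Prop :=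
  exists xs : blocks, feasible xs /\ forall x : blocks, feasible x -> thetasum xs <= thetasum x.

(* w* in W* :  theta(u) - theta(u* ) + (w - w* )^T F(w* ) >= 0 for all w in W,
   with F(w) = (-A_1^T y, ..., -A_m^T y, sum_i A_i x_i - b). *)
Definition in_Wstar (xs : blocks) (ys : 'cV[R]_l) : Prop :=
  (forall i, X i (xs i)) /\
  forall (x : blocks) (y : 'cV[R]_l), (forall i, X i (x i)) ->
    0 <= thetasum x - thetasum xs
         + \sum_i ((x i - xs i)^T *m (- ((A i)^T *m ys))) 0 0
         + ((y - ys)^T *m (Axsum xs - b)) 0 0.

Definition lgadmm_seq (x : nat -> blocks) (y : nat -> 'cV[R]_l) : Prop :=
  (forall i, X i (x 0%N i)) /\
  forall k : nat,
    (forall j : 'I_p.+1, j != ord_max ->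
       X j (x k.+1 j) /\
       let obj := fun z : 'cV[R]_(n j) =>
         theta j z
         + rho / 2 * sqn (A j *m z + \sum_(i | i != j) (A i *m x k i) - b - rho^-1 *: y k)
         + 1 / 2 * qf (P j) (z - x k j) in
       forall z, X j z -> obj (x k.+1 j) <= obj z)
    /\
    (X ord_max (x k.+1 ord_max) /\
       let obj := fun z : 'cV[R]_(n ord_max) =>
         theta ord_max z
         + rho / 2 * sqn (gam *: \sum_(i | i != ord_max) (A i *m x k.+1 i)
                          + (1 - gam) *: (b - A ord_max *m x k ord_max)
                          + A ord_max *m z - b - rho^-1 *: y k)
         + 1 / 2 * qf (P ord_max) (z - x k ord_max) in
       forall z, X ord_max z -> obj (x k.+1 ord_max) <= obj z)
    /\
    y k.+1 = y k - rho *: (gam *: \sum_(i | i != ord_max) (A i *m x k.+1 i)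
                          + (1 - gam) *: (b - A ord_max *m x k ord_max)
                          + A ord_max *m x k.+1 ord_max - b).

End Problem.

Definition blocks_sub (x z : blocks) : blocks := fun i => x i - z i.

End Iter.
Arguments G1form {R p l n}. Arguments G1_pd {R p l n}. Arguments Hform {R p l n}.
Arguments Axsum {R p l n}. Arguments thetasum {R p n}. Arguments feasible {R p l n}.
Arguments P_solvable {R p l n}. Arguments in_Wstar {R p l n}.
Arguments lgadmm_seq {R p l n}. Arguments blocks_sub {R p n}.

(* Main.v *)
Require Import Defs.
From HB Require Import structures.
From mathcomp Require Import all_boot all_order all_algebra.
From mathcomp Require Import all_classical all_reals all_analysis.
From mathcomp Require Import ring lra.
Import numFieldNormedType.Exports.
Import Order.TTheory GRing.Theory Num.Theory.
Local Open Scope ring_scope.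
Local Open Scope classical_set_scope.

Section DotLemmas.
Context {R : realType}.

Definition dot {k} (u v : 'cV[R]_k) : R := (u^T *m v) 0 0.

Lemma dotE {k} (u v : 'cV[R]_k) : dot u v = \sum_i u i 0 * v i 0.
Proof. by rewrite /dot mxE; apply: eq_bigr => i _; rewrite mxE. Qed.

Lemma dotC {k} (u v : 'cV[R]_k) : dot u v = dot v u.
Proof. by rewrite !dotE; apply: eq_bigr => i _; rewrite mulrC. Qed.

Lemma dotDl {k} (u v w : 'cV[R]_k) : dot (u + v) w = dot u w + dot v w.
Proof. by rewrite !dotE -big_split; apply: eq_bigr => i _; rewrite mxE mulrDl. Qed.

Lemma dotZl {k} a (u w : 'cV[R]_k) : dot (a *: u) w = a * dot u w.
Proof. by rewrite !dotE mulr_sumr; apply: eq_bigr => i _; rewrite mxE mulrA. Qed.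

Lemma dotNl {k} (u w : 'cV[R]_k) : dot (- u) w = - dot u w.
Proof. by rewrite -scaleN1r dotZl mulN1r. Qed.

Lemma dotBl {k} (u v w : 'cV[R]_k) : dot (u - v) w = dot u w - dot v w.
Proof. by rewrite dotDl dotNl. Qed.

Lemma dotDr {k} (u v w : 'cV[R]_k) : dot w (u + v) = dot w u + dot w v.
Proof. by rewrite !(dotC w) dotDl. Qed.
Lemma dotZr {k} a (u w : 'cV[R]_k) : dot w (a *: u) = a * dot w u.
Proof. by rewrite !(dotC w) dotZl. Qed.
Lemma dotNr {k} (u w : 'cV[R]_k) : dot w (- u) = - dot w u.
Proof. by rewrite !(dotC w) dotNl. Qed.
Lemma dotBr {k} (u v w : 'cV[R]_k) : dot w (u - v) = dot w u - dot w v.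
Proof. by rewrite !(dotC w) dotBl. Qed.
Lemma dot0l {k} (w : 'cV[R]_k) : dot 0 w = 0.
Proof. by rewrite dotE big1 // => i _; rewrite mxE mul0r. Qed.
Lemma dot0r {k} (w : 'cV[R]_k) : dot w 0 = 0.
Proof. by rewrite dotC dot0l. Qed.

Lemma dot_suml {k} I (r : seq I) (Pr : pred I) (f : I -> 'cV[R]_k) w :
  dot (\sum_(i <- r | Pr i) f i) w = \sum_(i <- r | Pr i) dot (f i) w.
Proof.
by apply: (big_morph (fun u => dot u w) (fun u v => dotDl u v w) (dot0l w)).
Qed.
Lemma dot_sumr {k} I (r : seq I) (Pr : pred I) (f : I -> 'cV[R]_k) w :
  dot w (\sum_(i <- r | Pr i) f i) = \sum_(i <- r | Pr i) dot w (f i).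
Proof. by rewrite dotC dot_suml; apply: eq_bigr => i _; rewrite dotC. Qed.

Lemma dot_mul {a b} (M : 'M[R]_(a, b)) u v : dot u (M *m v) = dot (M^T *m u) v.
Proof. by rewrite /dot trmx_mul trmxK mulmxA. Qed.

Lemma bilE {a b} (u : 'cV[R]_a) (M : 'M[R]_(a, b)) v : bil u M v = dot u (M *m v).
Proof. by rewrite /bil /dot mulmxA. Qed.

Lemma qfE {a} (M : 'M[R]_a) v : qf M v = dot v (M *m v).
Proof. exact: bilE. Qed.

Lemma sqnE {a} (v : 'cV[R]_a) : sqn v = dot v v.
Proof. by []. Qed.

Lemma dot_ge0 {a} (v : 'cV[R]_a) : 0 <= dot v v.
Proof. by rewrite dotE sumr_ge0 // => i _; rewrite -expr2 sqr_ge0. Qed.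

End DotLemmas.


Lemma convf (R : realType) k (f : 'cV[R]_k -> R) (hf : convex_function setT f)
  (a b : 'cV[R]_k) (t : R) : 0 <= t -> t <= 1 ->
  f (t *: a + (1 - t) *: b) <= t * f a + (1 - t) * f b.
Proof.
move=> t0 t1.
have := hf (Itv01 t0 t1) a b (mem_set I) (mem_set I).
by rewrite /= convRE /=.
Qed.

Lemma convs (R : realType) k (X : set 'cV[R]_k) (hX : convex_set X)
  (a b : 'cV[R]_k) (t : R) : 0 <= t -> t <= 1 -> X a -> X b ->
  X (t *: a + (1 - t) *: b).
Proof.
move=> t0 t1 Xa Xb.
have := hX a b (Itv01 t0 t1) (mem_set Xa) (mem_set Xb).
by rewrite inE /=.
Qed.

Lemma small_t (R : realType) (al M : R) :
  (forall t, 0 < t -> t <= 1 -> 0 <= al + t * M) -> 0 <= al.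
Proof.
move=> H; rewrite leNgt; apply/negP => al0.
have nM := normr_ge0 M.
set K := `|M| - al.
have K0 : 0 < K by rewrite /K; lra.
have t0 : 0 < - al / K by rewrite divr_gt0 // oppr_gt0.
have t1 : - al / K <= 1 by rewrite ler_pdivrMr // mul1r /K; lra.
have h := H _ t0 t1.
have hM : - al / K * M <= - al / K * `|M|.
  by rewrite ler_pM2l // real_ler_norm // num_real.
have e : al + - al / K * `|M| = - (al * al) / K.
  rewrite /K; field; rewrite -/K; exact: lt0r_neq0.
have : 0 < (al * al) / K by rewrite divr_gt0 //; nra.
rewrite mulNr in e; lra.
Qed.

Lemma sqn_lin (R : realType) k (v w : 'cV[R]_k) t :
  dot (v + t *: w) (v + t *: w) = dot v v + t * (2 * dot v w) + t ^+ 2 * dot w w.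
Proof. rewrite !(dotDl, dotDr, dotZl, dotZr) (dotC w v); ring. Qed.

Lemma qf_lin (R : realType) k (P : 'M[R]_k) (hP : P^T = P) (v w : 'cV[R]_k) t :
  dot (v + t *: w) (P *m (v + t *: w)) =
  dot v (P *m v) + t * (2 * dot w (P *m v)) + t ^+ 2 * dot w (P *m w).
Proof.
rewrite mulmxDr -scalemxAr !(dotDl, dotDr, dotZl, dotZr).
rewrite [dot v (P *m w)]dot_mul hP (dotC (P *m v) w); ring.
Qed.

Lemma vi_block (R : realType) k l (th : 'cV[R]_k -> R)
  (hth : convex_function setT th) (X : set 'cV[R]_k) (hX : convex_set X)
  (A : 'M[R]_(l, k)) (P : 'M[R]_k) (hP : P^T = P)
  (F : 'cV[R]_k -> 'cV[R]_l) (c : 'cV[R]_l) (hF : forall z, F z = A *m z + c)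
  (rho : R) (o a b : 'cV[R]_k) :
  X a -> X b ->
  (forall z, X z -> th a + rho / 2 * sqn (F a) + 1 / 2 * qf P (a - o)
                 <= th z + rho / 2 * sqn (F z) + 1 / 2 * qf P (z - o)) ->
  0 <= th b - th a + rho * dot (A *m (b - a)) (F a) + dot (b - a) (P *m (a - o)).
Proof.
move=> Xa Xb Hmin.
set d := b - a.
apply: (@small_t _ _ (rho / 2 * dot (A *m d) (A *m d) + 1 / 2 * dot d (P *m d))).
move=> t t0 t1.
set z := t *: b + (1 - t) *: a.
have Xz : X z by exact: (@convs _ _ _ hX b a t (ltW t0) t1 Xb Xa).
have hz : z = a + t *: d.
  by rewrite /z /d; apply/matrixP => i j; rewrite !mxE; ring.
have hc := @convf _ _ _ hth b a t (ltW t0) t1.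
have h := Hmin z Xz.
have eF : F z = F a + t *: (A *m d) by rewrite !hF hz mulmxDr -scalemxAr; apply/matrixP => i j; rewrite !mxE; ring.
have eo : z - o = (a - o) + t *: d by rewrite hz; apply/matrixP => i j; rewrite !mxE; ring.
rewrite -/z in hc.
rewrite !sqnE !qfE eF eo sqn_lin qf_lin // in h.
have ed : dot d (P *m (a - o)) = dot (a - o) (P *m d) by rewrite dot_mul hP dotC.
set Q1 := dot (F a) (F a) in h.
set Q2 := dot (a - o) (P *m (a - o)) in h.
set X1 := dot (F a) (A *m d) in h.
set X2 := dot d (P *m (a - o)) in h *.
set Y1 := dot (A *m d) (A *m d) in h *.
set Y2 := dot d (P *m d) in h *.
rewrite (dotC (A *m d)) -/X1.
have E : t * (th b - th a + rho * X1 + X2 + t * (rho / 2 * Y1 + 1 / 2 * Y2))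
    = (t * th b + (1 - t) * th a - th z) + ((th z + rho / 2 * (Q1 + t * (2 * X1) + t ^+ 2 * Y1) +
         1 / 2 * (Q2 + t * (2 * X2) + t ^+ 2 * Y2)) - (th a + rho / 2 * Q1 + 1 / 2 * Q2)).
  by field.
have : 0 <= t * (th b - th a + rho * X1 + X2 + t * (rho / 2 * Y1 + 1 / 2 * Y2)).
  by rewrite E; apply: addr_ge0; rewrite subr_ge0.
by rewrite pmulr_rge0.
Qed.


Lemma final_ineq (R : realType) l (s SW Y a c : 'cV[R]_l) (rho gam : R)
  (tDD tDW tWW pDD pDW pWW : R) :
  0 < rho -> 0 < gam -> gam < 2 ->
  let Z := Y + rho *: (gam *: s - (1 - gam) *: c + a) in
  let SE := s + SW in
  0 <= dot s Z - rho * dot s (SE + c) + tDW ->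
  0 <= dot a Y + pDW ->
  0 <= tWW - rho * dot SW SW -> 0 <= pWW ->
  (tDD - rho * dot s s) + pDD + rho / gam * dot a a + 2 * ((1 - gam) / gam) * dot a Y
    + (gam * rho)^-1 * dot Y Y
  <= (tDD + 2 * tDW + tWW - rho * dot SE SE) + (pDD + 2 * pDW + pWW)
    + rho / gam * dot c c + 2 * ((1 - gam) / gam) * dot c Z + (gam * rho)^-1 * dot Z Z.
Proof.
move=> r0 g0 g2 Z SE h1 h2 h3 h4.
have h5 : 0 <= (2 - gam) * rho * dot (s + c) (s + c).
  by rewrite mulr_ge0 ?dot_ge0 // mulr_ge0 //; lra.
rewrite -subr_ge0.
suff -> : (tDD + 2 * tDW + tWW - rho * dot SE SE) + (pDD + 2 * pDW + pWW)
    + rho / gam * dot c c + 2 * ((1 - gam) / gam) * dot c Z + (gam * rho)^-1 * dot Z Z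
    - ((tDD - rho * dot s s) + pDD + rho / gam * dot a a + 2 * ((1 - gam) / gam) * dot a Y
    + (gam * rho)^-1 * dot Y Y)
  = 2 * (dot s Z - rho * dot s (SE + c) + tDW) + 2 * (dot a Y + pDW)
    + (tWW - rho * dot SW SW) + pWW + (2 - gam) * rho * dot (s + c) (s + c).
  have := dot_ge0 (s + c); nra.
rewrite /Z /SE !(dotDl, dotDr, dotBl, dotBr, dotZl, dotZr, dotNl, dotNr).
rewrite ?(dotC SW s) ?(dotC Y s) ?(dotC a s) ?(dotC c s) ?(dotC Y SW) ?(dotC a SW)
  ?(dotC c SW) ?(dotC a Y) ?(dotC c Y) ?(dotC c a).
field.
by apply/andP; split; apply/lt0r_neq0.
Qed.


Section Forms.
Context {R : realType} {p l : nat} {n : 'I_p.+1 -> nat}.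
Variables (A : forall i, 'M[R]_(l, n i)) (P : forall i, 'M[R]_(n i)) (rho gam : R).
Notation blocks := (forall i : 'I_p.+1, 'cV[R]_(n i)).

Definition Sv (u : blocks) : 'cV[R]_l := \sum_(i | i != ord_max) A i *m u i.
Definition Tf (u v : blocks) : R :=
  \sum_(i | i != ord_max) (dot (u i) (P i *m v i) + rho * dot (A i *m u i) (A i *m v i)).

Lemma dotAt {a b} (M : 'M[R]_(a, b)) u v : dot u (M^T *m v) = dot (M *m u) v.
Proof. by rewrite dot_mul trmxK. Qed.

Lemma G1E (u : blocks) : G1form A P rho u = Tf u u - rho * dot (Sv u) (Sv u).
Proof.
rewrite /G1form /Tf /Sv dot_suml.
have e : forall i, i != ord_max ->
  \sum_(j | (j != ord_max) && (j != i)) bil (u i) (- rho *: ((A i)^T *m A j)) (u j)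
  = - rho * (dot (A i *m u i) (\sum_(j | j != ord_max) A j *m u j)
             - dot (A i *m u i) (A i *m u i)).
  move=> i hi.
  rewrite dot_sumr [in RHS](bigD1 i) //= [X in _ = _ * X]addrC addKr mulr_sumr.
  apply: eq_bigr => j _.
  by rewrite bilE -scalemxAl -mulmxA dotZr dotAt.
rewrite (eq_bigr _ e) -mulr_sumr sumrB mulrBr.
have -> : \sum_(i | i != ord_max) qf (P i) (u i) = \sum_(i | i != ord_max) dot (u i) (P i *m u i).
  by apply: eq_bigr => i _; rewrite qfE.
rewrite big_split /= -mulr_sumr.
ring.
Qed.

Lemma HformE (u : blocks) yv :
  Hform A P rho gam u yv = G1form A P rho u + dot (u ord_max) (P ord_max *m u ord_max)
   + rho / gam * dot (A ord_max *m u ord_max) (A ord_max *m u ord_max)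
   + 2 * ((1 - gam) / gam) * dot (A ord_max *m u ord_max) yv
   + (gam * rho)^-1 * dot yv yv.
Proof.
rewrite /Hform /= !qfE !bilE mulmxDl -scalemxAl -mulmxA dotDr dotZr dotAt.
rewrite -!scalemxAl !dotZr dotAt mul_scalar_mx dotZr (dotC yv).
ring.
Qed.

Lemma Slin (u v : blocks) : Sv (fun i => u i + v i) = Sv u + Sv v.
Proof. by rewrite /Sv -big_split; apply: eq_bigr => i _; rewrite mulmxDr. Qed.

Lemma Tsplit (hP : forall i, (P i)^T = P i) (D W : blocks) :
  Tf (fun i => D i + W i) (fun i => D i + W i) = Tf D D + 2 * Tf D W + Tf W W.
Proof.
rewrite /Tf mulr_sumr -!big_split; apply: eq_bigr => i _ /=.
rewrite !(mulmxDr, dotDl, dotDr).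
rewrite [dot (W i) (P i *m D i)]dotC -(dotAt (P i) (D i) (W i)) hP (dotC (A i *m W i)).
ring.
Qed.

Lemma Tsplit' (hP : forall i, (P i)^T = P i) (E D : blocks) :
  Tf E E = Tf D D + 2 * Tf D (blocks_sub E D) + Tf (blocks_sub E D) (blocks_sub E D).
Proof.
rewrite -Tsplit //; rewrite /Tf; apply: eq_bigr => i _.
by rewrite /blocks_sub [D i + _]addrC subrK.
Qed.

Lemma Slin' (E D : blocks) : Sv E = Sv D + Sv (blocks_sub E D).
Proof.
rewrite -Slin /Sv; apply: eq_bigr => i _.
by rewrite /blocks_sub [D i + _]addrC subrK.
Qed.

End Forms.


Section Main.
Variables (R : realType) (p l : nat) (n : 'I_p.+1 -> nat)
  (theta : forall i, 'cV[R]_(n i) -> R) (X : forall i, set 'cV[R]_(n i))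
  (A : forall i, 'M[R]_(l, n i)) (b : 'cV[R]_l)
  (rho gam : R) (P : forall i, 'M[R]_(n i))
  (htheta : forall i, convex_function setT (theta i))
  (hXcv : forall i, convex_set (X i))
  (hrho : 0 < rho)
  (hPs : forall i, (P i)^T = P i)
  (x : nat -> forall i, 'cV[R]_(n i)) (y : nat -> 'cV[R]_l)
  (hseq : lgadmm_seq A P rho gam theta X b x y).

Lemma block_j k (j : 'I_p.+1) (hj : j != ord_max) :
  0 <= dot (A j *m (x k.+1 j - x k.+2 j)) (y k - y k.+1)
       - rho * dot (A j *m (x k.+1 j - x k.+2 j))
            (A j *m (x k.+1 j - x k.+2 j) - A j *m (x k j - x k.+1 j))
       - rho * dot (A j *m (x k.+1 j - x k.+2 j)) (\sum_i A i *m (x k i - x k.+1 i))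
       + dot (x k.+1 j - x k.+2 j) (P j *m ((x k j - x k.+1 j) - (x k.+1 j - x k.+2 j))).
Proof.
have [hk _] := hseq.2 k.
have [hk1 _] := hseq.2 k.+1.
have [Xa Hk] := hk j hj.
have [Xb Hk1] := hk1 j hj.
pose ck := \sum_(i | i != j) (A i *m x k i) - b - rho^-1 *: y k.
pose ck1 := \sum_(i | i != j) (A i *m x k.+1 i) - b - rho^-1 *: y k.+1.
pose Fk := fun z => A j *m z + \sum_(i | i != j) (A i *m x k i) - b - rho^-1 *: y k.
pose Fk1 := fun z => A j *m z + \sum_(i | i != j) (A i *m x k.+1 i) - b - rho^-1 *: y k.+1.
have hFk : forall z, Fk z = A j *m z + ck by move=> z; rewrite /Fk /ck !addrA.
have hFk1 : forall z, Fk1 z = A j *m z + ck1 by move=> z; rewrite /Fk1 /ck1 !addrA.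
have v1 := @vi_block R _ _ (theta j) (htheta j) (X j) (hXcv j) (A j) (P j) (hPs j)
  Fk ck hFk rho (x k j) (x k.+1 j) (x k.+2 j) Xa Xb Hk.
have v2 := @vi_block R _ _ (theta j) (htheta j) (X j) (hXcv j) (A j) (P j) (hPs j)
  Fk1 ck1 hFk1 rho (x k.+1 j) (x k.+2 j) (x k.+1 j) Xb Xa Hk1.
have hs : \sum_(i | i != j) A i *m x k.+1 i = \sum_(i | i != j) A i *m x k i
   - (\sum_i A i *m (x k i - x k.+1 i) - A j *m (x k j - x k.+1 j)).
  rewrite [X in _ - (X - _)](bigD1 j) //= addrC addrK.
  under [X in _ = _ - X]eq_bigr do rewrite mulmxBr.
  by rewrite sumrB opprB addrC subrK.
have eF : Fk1 (x k.+2 j) = Fk (x k.+1 j) + (rho^-1 *: (y k - y k.+1)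
    - (A j *m (x k.+1 j - x k.+2 j) - A j *m (x k j - x k.+1 j))
    - \sum_i A i *m (x k i - x k.+1 i)).
  rewrite /Fk1 /Fk hs !mulmxBr; apply/matrixP => r c; rewrite !mxE; ring.
rewrite eF in v2.
rewrite -[x k.+2 j - x k.+1 j]opprB -[x k.+1 j - x k j]opprB !mulmxN !dotNl in v1 v2.
rewrite !mulmxBr !(dotDr, dotBr, dotNr, dotZr) in v1 v2 *.
have r0 : rho != 0 by apply: lt0r_neq0.
apply: (le_trans (addr_ge0 v1 v2)); rewrite le_eqVlt; apply/orP; left; apply/eqP.
by field.
Qed.
Local Notation om := (@ord_max p).

Lemma Fm_eq k : let m := @ord_max p in
  gam *: \sum_(i | i != m) (A i *m x k.+1 i) + (1 - gam) *: (b - A m *m x k m)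
    + A m *m x k.+1 m - b - rho^-1 *: y k = - (rho^-1 *: y k.+1).
Proof.
move=> m.
have [_ [_ hy]] := hseq.2 k.
have r0 : rho != 0 by apply: lt0r_neq0.
rewrite hy; apply/matrixP => r c; rewrite !mxE; by field.
Qed.

Lemma block_m k :
  0 <= dot (A om *m (x k.+1 om - x k.+2 om)) (y k.+1 - y k.+2)
       + dot (x k.+1 om - x k.+2 om) (P om *m ((x k om - x k.+1 om) - (x k.+1 om - x k.+2 om))).
Proof.
have [_ [[Xa Hk] _]] := hseq.2 k.
have [_ [[Xb Hk1] _]] := hseq.2 k.+1.
pose Fk := fun z => gam *: \sum_(i | i != om) (A i *m x k.+1 i) + (1 - gam) *: (b - A om *m x k om)
    + A om *m z - b - rho^-1 *: y k.
pose Fk1 := fun z => gam *: \sum_(i | i != om) (A i *m x k.+2 i) + (1 - gam) *: (b - A om *m x k.+1 om)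
    + A om *m z - b - rho^-1 *: y k.+1.
pose ck := gam *: \sum_(i | i != om) (A i *m x k.+1 i) + (1 - gam) *: (b - A om *m x k om)
    - b - rho^-1 *: y k.
pose ck1 := gam *: \sum_(i | i != om) (A i *m x k.+2 i) + (1 - gam) *: (b - A om *m x k.+1 om)
    - b - rho^-1 *: y k.+1.
have hFk : forall z, Fk z = A om *m z + ck.
  by move=> z; rewrite /Fk /ck; apply/matrixP => r c; rewrite !mxE; ring.
have hFk1 : forall z, Fk1 z = A om *m z + ck1.
  by move=> z; rewrite /Fk1 /ck1; apply/matrixP => r c; rewrite !mxE; ring.
have v1 := @vi_block R _ _ (theta om) (htheta om) (X om) (hXcv om) (A om) (P om) (hPs om)
  Fk ck hFk rho (x k om) (x k.+1 om) (x k.+2 om) Xa Xb Hk.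
have v2 := @vi_block R _ _ (theta om) (htheta om) (X om) (hXcv om) (A om) (P om) (hPs om)
  Fk1 ck1 hFk1 rho (x k.+1 om) (x k.+2 om) (x k.+1 om) Xb Xa Hk1.
have e1 : Fk (x k.+1 om) = - (rho^-1 *: y k.+1) by exact: (Fm_eq k).
have e2 : Fk1 (x k.+2 om) = - (rho^-1 *: y k.+2) by exact: (Fm_eq k.+1).
rewrite e1 in v1; rewrite e2 in v2.
rewrite -[x k.+2 om - x k.+1 om]opprB -[x k.+1 om - x k om]opprB !mulmxN !dotNl in v1 v2.
rewrite !mulmxBr !(dotDr, dotBr, dotNr, dotZr) in v1 v2 *.
have r0 : rho != 0 by apply: lt0r_neq0.
apply: (le_trans (addr_ge0 v1 v2)); rewrite le_eqVlt; apply/orP; left; apply/eqP.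
by field.
Qed.

Lemma yrel k :
  y k - y k.+1 = (y k.+1 - y k.+2) + rho *: (gam *: Sv A (blocks_sub (x k.+1) (x k.+2))
     - (1 - gam) *: (A om *m (x k om - x k.+1 om)) + A om *m (x k.+1 om - x k.+2 om)).
Proof.
have [_ [_ hy1]] := hseq.2 k.
have [_ [_ hy2]] := hseq.2 k.+1.
have hs : Sv A (blocks_sub (x k.+1) (x k.+2)) =
   \sum_(i | i != om) (A i *m x k.+1 i) - \sum_(i | i != om) (A i *m x k.+2 i).
  by rewrite /Sv -sumrB; apply: eq_bigr => i _; rewrite mulmxBr.
rewrite hs hy2 hy1 !mulmxBr; apply/matrixP => r c; rewrite !mxE; ring.
Qed.

Lemma G1_nonneg (hG1 : G1_pd A P rho) (W : forall i, 'cV[R]_(n i)) :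
  0 <= G1form A P rho W.
Proof.
case: (pselect (exists i, (i != om) && (W i != 0))) => [h|h].
  exact/ltW/hG1.
have h0 : forall i, i != om -> W i = 0.
  move=> i hi; apply/eqP; apply: contra_notT h => hW; exists i; exact/andP.
rewrite /G1form big1 ?add0r; last by move=> i hi; rewrite h0 // qfE dot0l.
rewrite big1 //; move=> i hi; rewrite big1 // => j _.
by rewrite h0 // bilE dot0l.
Qed.

Lemma P_nonneg (Q : 'M[R]_(n om)) (hQ : sym_pd Q) (v : 'cV[R]_(n om)) :
  0 <= dot v (Q *m v).
Proof.
have [_ hpd] := hQ.
have [->|v0] := eqVneq v 0; first by rewrite mulmx0 dot0r.
by rewrite -qfE; apply/ltW/hpd.
Qed.

Lemma main_k k (hG1 : G1_pd A P rho) (hPpd : forall i, sym_pd (P i)) (hgam : 0 < gam < 2) :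
    Hform A P rho gam (blocks_sub (x k.+1) (x k.+2)) (y k.+1 - y k.+2)
    <= Hform A P rho gam (blocks_sub (x k) (x k.+1)) (y k - y k.+1).
Proof.
set D := blocks_sub (x k.+1) (x k.+2).
set E := blocks_sub (x k) (x k.+1).
set W := blocks_sub E D.
have [g0 g2] : 0 < gam /\ gam < 2 by move/andP: hgam.
rewrite !HformE !G1E.
rewrite (Tsplit' A P rho hPs E D) -/W (Slin' A E D) -/W.
have ZE := yrel k.
rewrite -/D in ZE.
have hEom : E om = D om + W om by rewrite /W /blocks_sub [D om + _]addrC subrK.
have hp : forall d w : 'cV[R]_(n om), dot (d + w) (P om *m (d + w)) = dot d (P om *m d)
   + 2 * dot d (P om *m w) + dot w (P om *m w).
  move=> d w; rewrite !(mulmxDr, dotDl, dotDr).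
  rewrite [dot w (P om *m d)]dotC -(dotAt (P om) d w) hPs; ring.
have hp2 : dot (E om) (P om *m E om) = dot (D om) (P om *m D om)
   + 2 * dot (D om) (P om *m W om) + dot (W om) (P om *m W om) by rewrite hEom hp.
rewrite hp2.
rewrite -[x k om - x k.+1 om]/(E om) -[x k.+1 om - x k.+2 om]/(D om) in ZE.
rewrite ZE.
have := @final_ineq R l (Sv A D) (Sv A W) (y k.+1 - y k.+2) (A om *m D om) (A om *m E om) rho gam
   (Tf A P rho D D) (Tf A P rho D W) (Tf A P rho W W)
   (dot (D om) (P om *m D om)) (dot (D om) (P om *m W om)) (dot (W om) (P om *m W om))
   hrho g0 g2 => /=.
apply.
- rewrite -ZE.
  have hSA : \sum_i A i *m (x k i - x k.+1 i) = Sv A D + Sv A W + A om *m E om.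
    rewrite (bigD1 om) //= addrC -(Slin' A E D).
    by [].
  have hsum : \sum_(j | j != om) (dot (A j *m (x k.+1 j - x k.+2 j)) (y k - y k.+1)
       - rho * dot (A j *m (x k.+1 j - x k.+2 j))
            (A j *m (x k.+1 j - x k.+2 j) - A j *m (x k j - x k.+1 j))
       - rho * dot (A j *m (x k.+1 j - x k.+2 j)) (\sum_i A i *m (x k i - x k.+1 i))
       + dot (x k.+1 j - x k.+2 j) (P j *m ((x k j - x k.+1 j) - (x k.+1 j - x k.+2 j))))
     = dot (Sv A D) (y k - y k.+1) - rho * dot (Sv A D) (\sum_i A i *m (x k i - x k.+1 i))
       + Tf A P rho D W.
    rewrite /Sv /Tf !dot_suml mulr_sumr -sumrB -big_split /=; apply: eq_bigr => j _.
    rewrite /D /W /E /blocks_sub !mulmxBr !(dotBr, dotBl, dotDr, dotDl); ring.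
  rewrite -hSA -hsum; apply: sumr_ge0 => j hj; exact: block_j.
- exact: block_m.
- by have := G1_nonneg hG1 W; rewrite G1E.
- exact: P_nonneg.
Qed.

End Main.

(* m = p + 1 >= 2 blocks, indexed by 'I_p.+1; block m is ord_max. *)
Theorem theorem4p4 (R : realType) (p l : nat) (n : 'I_p.+1 -> nat)
  (hp : (1 <= p)%N) (hl : (0 < l)%N) (hn : forall i, (0 < n i)%N)
  (theta : forall i, 'cV[R]_(n i) -> R) (X : forall i, set 'cV[R]_(n i))
  (A : forall i, 'M[R]_(l, n i)) (b : 'cV[R]_l)
  (rho gam : R) (P : forall i, 'M[R]_(n i))
  (htheta : forall i, convex_function setT (theta i))
  (hX0 : forall i, X i !=set0) (hXc : forall i, closed (X i))
  (hXcv : forall i, convex_set (X i))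
  (hA : forall i, \rank (A i) = n i)
  (hsol : P_solvable A theta X b)
  (hWstar : exists xs ys, in_Wstar A theta X b xs ys)
  (hrho : 0 < rho) (hgam : 0 < gam < 2)
  (hP : forall i, sym_pd (P i))
  (hG1 : G1_pd A P rho)
  (x : nat -> forall i, 'cV[R]_(n i)) (y : nat -> 'cV[R]_l)
  (hseq : lgadmm_seq A P rho gam theta X b x y) :
  forall k : nat,
    Hform A P rho gam (blocks_sub (x k.+1) (x k.+2)) (y k.+1 - y k.+2)
    <= Hform A P rho gam (blocks_sub (x k) (x k.+1)) (y k - y k.+1).
Proof.
move=> k.
have hPs : forall i, (P i)^T = P i by move=> i; case: (hP i).
exact: (main_k R p l n theta X A b rho gam P htheta hXcv hrho hPs x y hseq k hG1 hP hgam).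
Qed.
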